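(* For an $E$-linear code $C$ of length $2n$, $C^{\perp_{S_L}}=C^{\perp_S}$ if and only if $C$ is left symplectic nice. Equivalently, $C^{\perp_{S_L}}=C^{\perp_S}$ if and only if $C$ is free.
   Context: $E=\langle \kappa,\tau \mid 2\kappa=2\tau=0,\ \kappa^2=\kappa,\ \tau^2=\tau,\ \kappa\tau=\kappa,\ \tau\kappa=\tau\rangle$ is the non-unital ring $\{0,\kappa,\tau,\zeta\}$ ($|E|=4$), $\zeta=\kappa+\tau$, with $e\kappa=e\tau=e$, $e\zeta=0$ for all $e\in E$. Every $e\in E$ is uniquely $u\kappa+v\zeta$ ($u,v\in\mathbb{F}_2$); $\pi(u\kappa+v\zeta)=u$, componentwise. An $E$-linear code of length $2n$ is a left $E$-submodule $C\subseteq E^{2n}$; $C_{Res}=\pi(C)$, $C_{Tor}=\{v\in\mathbb{F}_2^{2n}:\zeta v\in C\}$ (componentwise, $0\cdot\zeta=0,1\cdot\zeta=\zeta$); $C$ is free if $C_{Res}=C_{Tor}$. Symplectic inner product: $\langle (u|v),(u'|v')\rangle_s=\sum_i u_iv'_i+\sum_i v_iu'_i$. $C^{\perp_{S_L}}=\{z\in E^{2n}:\langle z,w\rangle_s=0\ \forall w\in C\}$, $C^{\perp_{S_R}}=\{z\in E^{2n}:\langle w,z\rangle_s=0\ \forall w\in C\}$, $C^{\perp_S}=C^{\perp_{S_L}}\cap C^{\perp_{S_R}}$. $C$ is left symplectic nice if $|C|\,|C^{\perp_{S_L}}|=|E|^{2n}$. *)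

(* Defs.v *)
From mathcomp Require Import all_boot all_order.
Set Implicit Arguments. Unset Strict Implicit. Unset Printing Implicit Defensive.

(* The non-unital ring E = {0, kappa, tau, zeta}.  Every element is uniquely
   u*kappa + v*zeta with u, v in F_2; we represent it by the pair (u, v)
   (bool = F_2, addition = xor). *)
Definition E : finType := (bool * bool)%type.

Definition E0 : E := (false, false).
Definition Ekappa : E := (true, false).
Definition Ezeta : E := (false, true).
Definition Etau : E := (true, true).

Definition Eadd (x y : E) : E := (addb x.1 y.1, addb x.2 y.2).
(* e*kappa = e*tau = e, e*zeta = 0, extended bilinearly:
   (u k + v z)(u' k + v' z) = u' (u k + v z). *)
Definition Emul (x y : E) : E := (x.1 && y.1, x.2 && y.1).

Lemma E_rel_kk : Emul Ekappa Ekappa = Ekappa. Proof. by []. Qed.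
Lemma E_rel_tt : Emul Etau Etau = Etau. Proof. by []. Qed.
Lemma E_rel_kt : Emul Ekappa Etau = Ekappa. Proof. by []. Qed.
Lemma E_rel_tk : Emul Etau Ekappa = Etau. Proof. by []. Qed.
Lemma E_zeta : Ezeta = Eadd Ekappa Etau. Proof. by []. Qed.
Lemma E_mul_right (e : E) :
  [/\ Emul e Ekappa = e, Emul e Etau = e & Emul e Ezeta = E0].
Proof. by case: e => [[] []]. Qed.

Definition Epi (x : E) : bool := x.1.
Definition Ezeta_of (b : bool) : E := if b then Ezeta else E0.

(* Words of length 2n over E, written (u | v) with u, v of length n. *)
Definition Eword (n : nat) : finType := ({ffun 'I_n -> E} * {ffun 'I_n -> E})%type.
Definition Bword (n : nat) : finType := ({ffun 'I_n -> bool} * {ffun 'I_n -> bool})%type.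

Definition Ezero_word n : Eword n := ([ffun=> E0], [ffun=> E0]).
Definition Eword_add n (x y : Eword n) : Eword n :=
  ([ffun i => Eadd (x.1 i) (y.1 i)], [ffun i => Eadd (x.2 i) (y.2 i)]).
Definition Eword_scale n (e : E) (x : Eword n) : Eword n :=
  ([ffun i => Emul e (x.1 i)], [ffun i => Emul e (x.2 i)]).

Definition E_linear_code n (C : {set Eword n}) : Prop :=
  [/\ Ezero_word n \in C,
      (forall x y, x \in C -> y \in C -> Eword_add x y \in C) &
      (forall e x, x \in C -> Eword_scale e x \in C)].

Definition sympl n (x y : Eword n) : E :=
  Eadd (\big[Eadd/E0]_(i < n) Emul (x.1 i) (y.2 i))
       (\big[Eadd/E0]_(i < n) Emul (x.2 i) (y.1 i)).

Definition sympl_dual_L n (C : {set Eword n}) : {set Eword n} :=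
  [set z | [forall w in C, sympl z w == E0]].
Definition sympl_dual_R n (C : {set Eword n}) : {set Eword n} :=
  [set z | [forall w in C, sympl w z == E0]].
Definition sympl_dual n (C : {set Eword n}) : {set Eword n} :=
  sympl_dual_L C :&: sympl_dual_R C.

Definition left_symplectic_nice n (C : {set Eword n}) : Prop :=
  #|C| * #|sympl_dual_L C| = #|E| ^ (2 * n).

Definition Eword_pi n (x : Eword n) : Bword n :=
  ([ffun i => Epi (x.1 i)], [ffun i => Epi (x.2 i)]).
Definition Bword_zeta n (b : Bword n) : Eword n :=
  ([ffun i => Ezeta_of (b.1 i)], [ffun i => Ezeta_of (b.2 i)]).

Definition C_Res n (C : {set Eword n}) : {set Bword n} := (@Eword_pi n) @: C.
Definition C_Tor n (C : {set Eword n}) : {set Bword n} :=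
  [set v | Bword_zeta v \in C].

Definition free_code n (C : {set Eword n}) : Prop := C_Res C = C_Tor C.

(* Main.v *)
Require Import Defs.
From mathcomp Require Import all_boot all_order all_algebra zify.
Set Implicit Arguments. Unset Strict Implicit. Unset Printing Implicit Defensive.
Import GRing.Theory.

Local Open Scope ring_scope.
Section B.
Variable n : nat.
Local Notation BW := (Bword n).

Definition Badd (x y : BW) : BW :=
  ([ffun i => x.1 i (+) y.1 i], [ffun i => x.2 i (+) y.2 i]).
Definition B0 : BW := ([ffun=> false], [ffun=> false]).
Definition bs (x y : BW) : bool :=
  (\big[addb/false]_(i < n) (x.1 i && y.2 i)) (+)
  (\big[addb/false]_(i < n) (x.2 i && y.1 i)).
Definition bdual (R : {set BW}) : {set BW} := [set y | [forall x in R, ~~ bs y x]].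
Definition bsubgroup (R : {set BW}) := B0 \in R /\ forall x y, x \in R -> y \in R -> Badd x y \in R.

Lemma bsC x y : bs x y = bs y x.
Proof.
rewrite /bs addbC; congr addb; apply: eq_bigr => i _; exact: andbC.
Qed.

Lemma bs_addl x z y : bs (Badd x z) y = bs x y (+) bs z y.
Proof.
rewrite /bs /Badd /=.
have H : forall (f g h : {ffun 'I_n -> bool}),
  \big[addb/false]_(i < n) ([ffun i => f i (+) g i] i && h i) =
  \big[addb/false]_(i < n) (f i && h i) (+) \big[addb/false]_(i < n) (g i && h i).
  move=> f g h; rewrite -big_split /=; apply: eq_bigr => i _.
  by rewrite ffunE; case: (f i); case: (g i); case: (h i).
rewrite !H; by rewrite addbACA.
Qed.

Lemma bs_addr x y z : bs x (Badd y z) = bs x y (+) bs x z.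
Proof. by rewrite bsC bs_addl !(bsC x). Qed.

Lemma bs0l y : bs B0 y = false.
Proof. by rewrite /bs !big1 // => i _; rewrite ffunE. Qed.

Lemma Badd_invol z : involutive (fun x => Badd x z).
Proof.
move=> x; rewrite /Badd /=; case: x => a b /=; congr pair; apply/ffunP=> i;
  rewrite !ffunE; by rewrite -addbA addbb addbF.
Qed.

Definition sg (b : bool) : int := if b then (-1)%R else 1%R.

Lemma sum_flip (T : finType) (P : pred T) (F : T -> int) (g : T -> T) :
  involutive g -> (forall x, P (g x) = P x) -> (forall x, P x -> F (g x) = - F x) ->
  \sum_(x | P x) F x = 0.
Proof.
move=> ig Pg Fg.
have e : \sum_(x | P x) F x = - \sum_(x | P x) F x.
  rewrite {1}(reindex_inj (inv_inj ig)) /= -sumrN.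
  apply: eq_big => x; first by rewrite Pg.
  by move=> Px; apply: Fg; rewrite -(Pg x).
lia.
Qed.

Lemma unit_sum (f : {ffun 'I_n -> bool}) i :
  \big[addb/false]_(j < n) (f j && [ffun j => j == i] j) = f i.
Proof.
rewrite (bigD1 i) //= ffunE eqxx andbT big1 ?addbF // => j /negPf ji.
by rewrite ffunE ji andbF.
Qed.

Lemma nondeg x : x != B0 -> exists y, bs x y.
Proof.
case: x => a b nx.
case: (pickP (fun i => a i)) => [i ai|a0].
  exists ([ffun=> false], [ffun j => j == i]).
  by rewrite /bs /= unit_sum ai big1 // => j _; rewrite ffunE andbF.
case: (pickP (fun i => b i)) => [i bi|b0].
  exists ([ffun j => j == i], [ffun=> false]).
  by rewrite /bs /= unit_sum bi big1 // => j _; rewrite ffunE andbF.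
case/eqP: nx; congr pair; apply/ffunP => i; rewrite ffunE; [exact: a0|exact: b0].
Qed.

Lemma card_bdual R : bsubgroup R -> #|R| * #|bdual R| = #|BW|.
Proof.
case=> R0 RD.
have S1 : \sum_(y : BW) \sum_(x in R) sg (bs x y) = (#|R| * #|bdual R|)%:Z.
  transitivity (\sum_(y : BW) if y \in bdual R then (#|R| : int) else 0).
    apply: eq_bigr => y _; case: ifP => yd.
      rewrite (eq_bigr (fun _ => 1)); last first.
        move=> x xR; move: yd; rewrite inE => /forallP/(_ x); rewrite xR /= bsC.
        by move/negPf => ->.
      by rewrite sumr_const natz.
    move: yd; rewrite inE => /negbT; rewrite negb_forall => /existsP [x0].
    rewrite negb_imply negbK => /andP [x0R bx0].
    apply: (@sum_flip _ _ _ (fun x => Badd x x0)); first exact: Badd_invol.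
      move=> x; apply/idP/idP => [xR|]; last by move=> xR; exact: RD.
      by rewrite -(Badd_invol x0 x); apply: RD.
    by move=> x _; rewrite /= bs_addl (bsC x0) bx0 /sg; case: (bs x y).
  by rewrite -big_mkcond /= sumr_const -[Posz #|R|]natz -mulrnA natz.
have S2 : \sum_(y : BW) \sum_(x in R) sg (bs x y) = (#|BW|)%:Z.
  rewrite exchange_big /=.
  rewrite (bigD1 B0) //=.
  have -> : \sum_(x in R | x != B0) \sum_(y : BW) sg (bs x y) = 0.
    apply: big1 => x /andP [xR xn0].
    have [y0 by0] := nondeg xn0.
    apply: (@sum_flip _ _ _ (fun y => Badd y y0)) => //; first exact: Badd_invol.
    by move=> y _; rewrite bs_addr by0 /sg; case: (bs x y).
  rewrite addr0 (eq_bigr (fun _ => 1)); first by rewrite sumr_const natz.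
  by move=> y _; rewrite bs0l.
by apply/eqP; rewrite -eqz_nat -S1 S2.
Qed.

End B.

Local Close Scope ring_scope.
Section Ecode.
Variable n : nat.
Local Notation BW := (Bword n).
Local Notation EW := (Eword n).

Definition ezp (z : EW) : BW := ([ffun i => (z.1 i).2], [ffun i => (z.2 i).2]).
Definition phi (z : EW) : BW * BW := (Eword_pi z, ezp z).
Definition psi (p : BW * BW) : EW :=
  ([ffun i => (p.1.1 i, p.2.1 i)], [ffun i => (p.1.2 i, p.2.2 i)]).

Lemma phiK : cancel phi psi.
Proof.
case=> a b; rewrite /phi /psi /=; congr pair; apply/ffunP => i;
  rewrite !ffunE /=; by case: (_ i).
Qed.
Lemma psiK : cancel psi phi.
Proof.
case=> [[a b] [c d]]; rewrite /phi /psi /Eword_pi /ezp /=; congr pair; congr pair;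
  apply/ffunP => i; by rewrite !ffunE.
Qed.

Lemma pi_psi p : Eword_pi (psi p) = p.1.
Proof. exact: (congr1 fst (psiK p)). Qed.
Lemma ezp_psi p : ezp (psi p) = p.2.
Proof. exact: (congr1 snd (psiK p)). Qed.

Lemma card_via (A : {set EW}) (X Y : {set BW}) :
  (forall z, (z \in A) = (Eword_pi z \in X) && (ezp z \in Y)) -> #|A| = #|X| * #|Y|.
Proof.
move=> H.
have -> : A = psi @: [set p | psi p \in A].
  apply/setP => z; apply/idP/imsetP => [zA|[p]]; last by rewrite inE => pA ->.
  by exists (phi z); rewrite ?inE phiK.
rewrite card_imset; last exact: (can_inj psiK).
rewrite -cardsX; apply: eq_card => p; rewrite !inE H.
by have := psiK p; case: p => a b; rewrite /phi; case => -> ->.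
Qed.

Lemma big_fst (F : 'I_n -> E) :
  (\big[Eadd/E0]_(i < n) F i).1 = \big[addb/false]_(i < n) (F i).1.
Proof. by elim/big_rec2: _ => //= i a b _ ->. Qed.
Lemma big_snd (F : 'I_n -> E) :
  (\big[Eadd/E0]_(i < n) F i).2 = \big[addb/false]_(i < n) (F i).2.
Proof. by elim/big_rec2: _ => //= i a b _ ->. Qed.

Lemma sympl_eq (z w : EW) :
  sympl z w = (bs (Eword_pi z) (Eword_pi w), bs (ezp z) (Eword_pi w)).
Proof.
rewrite /sympl /bs /Eadd /=; rewrite !big_fst !big_snd /=.
congr pair; congr addb; apply: eq_bigr => i _; by rewrite !ffunE.
Qed.

Lemma sympl_E0 (z w : EW) :
  (sympl z w == E0) = ~~ bs (Eword_pi z) (Eword_pi w) && ~~ bs (ezp z) (Eword_pi w).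
Proof. by rewrite sympl_eq /E0 xpair_eqE !eqbF_neg. Qed.

Lemma pi_zeta (t : BW) : Eword_pi (Bword_zeta t) = B0 n.
Proof. rewrite /Eword_pi /Bword_zeta /B0; congr pair; apply/ffunP => i; rewrite !ffunE; by case: (_ i). Qed.
Lemma ezp_zeta (t : BW) : ezp (Bword_zeta t) = t.
Proof. case: t => a b; rewrite /ezp /Bword_zeta; congr pair; apply/ffunP => i; rewrite !ffunE; by case: (_ i). Qed.

Variable C : {set EW}.
Hypothesis HC : E_linear_code C.
Local Notation R := (C_Res C).
Local Notation T := (C_Tor C).

Lemma RT x : x \in C -> Eword_pi x \in T.
Proof.
case: HC => _ _ Hs xC; rewrite inE.
have -> : Bword_zeta (Eword_pi x) = Eword_scale Ezeta x.
  rewrite /Bword_zeta /Eword_scale; congr pair; apply/ffunP => i; rewrite !ffunE;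
  by case: (_ i) => [[] []].
exact: Hs.
Qed.

Lemma RsubT : R \subset T.
Proof. by apply/subsetP => b /imsetP [x xC ->]; exact: RT. Qed.

Lemma ET x : x \in C -> ezp x \in T.
Proof.
case: HC => _ Ha Hs xC; rewrite inE.
have -> : Bword_zeta (ezp x) = Eword_add x (Eword_scale Ekappa x).
  rewrite /Bword_zeta /Eword_add /Eword_scale; congr pair; apply/ffunP => i; rewrite !ffunE;
  by case: (_ i) => [[] []].
by apply: Ha => //; apply: Hs.
Qed.

Lemma Cchar z : (z \in C) = (Eword_pi z \in R) && (ezp z \in T).
Proof.
case: HC => _ Ha Hs.
apply/idP/andP => [zC|[/imsetP [w wC e] zT]].
  by split; [apply: imset_f | apply: ET].
rewrite inE in zT.
have -> : z = Eword_add (Eword_scale Ekappa w) (Bword_zeta (ezp z)).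
  case: z e zT => a b e zT.
  rewrite /Eword_add /Eword_scale /Bword_zeta /ezp /=; congr pair; apply/ffunP => i;
  rewrite !ffunE.
    have := congr1 (fun p : BW => p.1 i) e; rewrite /Eword_pi /= !ffunE.
    by case: (a i) => [[] []]; case: (w.1 i) => [[] []].
  have := congr1 (fun p : BW => p.2 i) e; rewrite /Eword_pi /= !ffunE.
  by case: (b i) => [[] []]; case: (w.2 i) => [[] []].
by apply: Ha => //; apply: Hs.
Qed.

Lemma R_sub : bsubgroup R.
Proof.
case: HC => H0 Ha Hs; split.
  have -> : B0 n = Eword_pi (Ezero_word n).
    by rewrite /B0 /Eword_pi; congr pair; apply/ffunP => i; rewrite !ffunE.
  exact: imset_f.
move=> x y /imsetP [a aC ->] /imsetP [b bC ->].
have -> : Badd (Eword_pi a) (Eword_pi b) = Eword_pi (Eword_add a b).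
  by rewrite /Badd /Eword_pi; congr pair; apply/ffunP => i; rewrite !ffunE.
by apply: imset_f; apply: Ha.
Qed.

Lemma T_sub : bsubgroup T.
Proof.
case: HC => H0 Ha Hs; split.
  rewrite inE; have -> : Bword_zeta (B0 n) = Ezero_word n.
    by rewrite /B0 /Bword_zeta; congr pair; apply/ffunP => i; rewrite !ffunE.
  by [].
move=> x y; rewrite !inE => xT yT.
have -> : Bword_zeta (Badd x y) = Eword_add (Bword_zeta x) (Bword_zeta y).
  rewrite /Badd /Bword_zeta /Eword_add; congr pair; apply/ffunP => i; rewrite !ffunE;
  by case: (x.1 i); case: (y.1 i); case: (x.2 i); case: (y.2 i).
by apply: Ha.
Qed.

Lemma Lchar z : (z \in sympl_dual_L C) = (Eword_pi z \in bdual R) && (ezp z \in bdual R).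
Proof.
rewrite !inE; apply/forallP/andP => [H|[H1 H2] w].
  split; apply/forallP => x; apply/implyP => /imsetP [w wC ->];
  by have := H w; rewrite wC /= sympl_E0 => /andP [].
apply/implyP => wC; rewrite sympl_E0.
move/forallP/(_ (Eword_pi w)): H1; move/forallP/(_ (Eword_pi w)): H2.
by rewrite imset_f //= => -> ->.
Qed.

Lemma Rchar z : (z \in sympl_dual_R C) = (Eword_pi z \in bdual T).
Proof.
rewrite !inE; apply/forallP/forallP => [H t|H w].
  apply/implyP => tT; rewrite inE in tT.
  have := H (Bword_zeta t); rewrite tT /= sympl_E0 ezp_zeta => /andP [_].
  by rewrite bsC.
apply/implyP => wC; rewrite sympl_E0.
have := H (Eword_pi w); have := H (ezp w); rewrite RT // ET //= => h1 h2.
by rewrite bsC h2 bsC h1.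
Qed.

End Ecode.

Lemma card_bdualN n (R : {set Bword n}) : bsubgroup R -> (#|R| * #|bdual R|)%N = #|Bword n|.
Proof. exact: card_bdual. Qed.

Lemma B0_dual n (R : {set Bword n}) : B0 n \in bdual R.
Proof. by rewrite inE; apply/forallP => x; apply/implyP => _; rewrite bs0l. Qed.

Lemma dual_anti n (R T : {set Bword n}) : R \subset T -> bdual T \subset bdual R.
Proof.
move=> /subsetP RT; apply/subsetP => y; rewrite !inE => /forallP H.
by apply/forallP => x; apply/implyP => xR; have := H x; rewrite RT.
Qed.

Theorem mainTheorem10 (n : nat) (C : {set Eword n}) :
  E_linear_code C ->
  (sympl_dual_L C = sympl_dual C <-> left_symplectic_nice C) /\
  (sympl_dual_L C = sympl_dual C <-> free_code C).
Proof.
move=> HC.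
set R := C_Res C; set T := C_Tor C.
have hR := card_bdualN (R_sub HC).
have hT := card_bdualN (T_sub HC).
have hC : #|C| = #|R| * #|T| by apply: card_via => z; exact: Cchar.
have hL : #|sympl_dual_L C| = #|bdual R| * #|bdual R| by apply: card_via => z; exact: Lchar.
have hE : #|E| ^ (2 * n) = #|Bword n| * #|Bword n|.
  rewrite !card_prod !card_ffun !card_bool card_ord expnM -!expnMn.
  by [].
have r'0 : 0 < #|bdual R| by apply/card_gt0P; exists (B0 n); exact: B0_dual.
have RT := RsubT HC.
have key1 : sympl_dual_L C = sympl_dual C <-> bdual R \subset bdual T.
  split => [e|sub].
    apply/subsetP => y yR.
    have zL : psi (y, B0 n) \in sympl_dual_L C.
      by rewrite (@Lchar _ C) pi_psi ezp_psi /= yR B0_dual.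
    move: zL; rewrite e inE => /andP [_]; by rewrite (@Rchar _ C HC) pi_psi.
  apply/setP => z; rewrite /sympl_dual in_setI; case zL: (z \in sympl_dual_L C) => //=.
  rewrite (@Rchar _ C HC); move: zL; rewrite (@Lchar _ C) => /andP [h _].
  by rewrite (subsetP sub).
have free_card : free_code C <-> #|T| = #|R|.
  rewrite /free_code -/R -/T; split => [->//|e].
  by apply/eqP; rewrite eqEcard RT e leqnn.
have key2 : bdual R \subset bdual T <-> free_code C.
  rewrite free_card; split => [hs|e].
    have eq : bdual R = bdual T by apply/eqP; rewrite eqEsubset hs dual_anti.
    move: hT; rewrite -eq -hR => /eqP; rewrite eqn_pmul2r //; by move/eqP.
  have eq : R = T by apply/eqP; rewrite eqEcard RT e leqnn.
  by rewrite -eq.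
split; last by rewrite key1 key2.
rewrite key1 key2 free_card /left_symplectic_nice hC hL hE -hR.
have r0 : 0 < #|R| by apply/card_gt0P; exists (B0 n); case: (R_sub HC).
split => [e|].
  rewrite e -/R; lia.
rewrite -/R => e.
have : (#|R| * #|bdual R| * #|bdual R|) * #|T| = (#|R| * #|bdual R| * #|bdual R|) * #|R| by lia.
move/eqP; rewrite eqn_pmul2l ?muln_gt0 ?r0 ?r'0 //; by move/eqP.
Qed.
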